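(* Let $A$ be a set and $w\in A^*$ a word. Let $A_w$ be the set consisting of the empty word together with all words in $A^*$ that start with $w$ (i.e. have $w$ as a prefix). Then $A_w$ is a free submonoid of $A^*$ if and only if $w$ is non-overlapping.
   Context: $A^*$ is the free monoid of finite words over $A$ under concatenation; $l(x)$ denotes the length of a word $x$. A word $u$ overlaps with a word $v$ if there exist words $x,y$ with $ux=yv$ and $l(y)<l(u)$. A word $w$ is non-overlapping if it does not overlap with itself. A submonoid of $A^*$ is free if every element has a unique factorization into irreducibles (nonempty elements of the submonoid not expressible as a product of two nonempty elements of the submonoid). *)

(* Defs.v *)
From Stdlib Require Import List.
Import ListNotations.

(* u overlaps with v: there are words x, y with u x = y v and 0 < l(y) < l(u).
   (The nonemptiness of y is the intended reading.) *)
Definition overlaps {A : Type} (u v : list A) : Prop :=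
  exists x y : list A, u ++ x = y ++ v /\ 0 < length y /\ length y < length u.

Definition non_overlapping {A : Type} (w : list A) : Prop := ~ overlaps w w.

Definition is_submonoid {A : Type} (S : list A -> Prop) : Prop :=
  S [] /\ (forall x y, S x -> S y -> S (x ++ y)).

Definition irreducible {A : Type} (S : list A -> Prop) (x : list A) : Prop :=
  S x /\ x <> [] /\
  ~ (exists y z, S y /\ S z /\ y <> [] /\ z <> [] /\ x = y ++ z).

Definition free_submonoid {A : Type} (S : list A -> Prop) : Prop :=
  is_submonoid S /\
  forall x, S x ->
    exists! fs : list (list A),
      (forall f, In f fs -> irreducible S f) /\ concat fs = x.

Definition A_w {A : Type} (w : list A) : list A -> Prop :=
  fun x => x = [] \/ exists v, x = w ++ v.

(* Main.v *)
Require Import Defs.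
From Stdlib Require Import List Lia Classical.
Import ListNotations.

Lemma irr_short {A : Type} (w x : list A) :
  w <> [] -> A_w w x -> x <> [] -> length x < 2 * length w -> irreducible (A_w w) x.
Proof.
  intros Hw Hx Hne Hl. split; [exact Hx|]. split; [exact Hne|].
  intros [y [z [Hy [Hz [Hy0 [Hz0 E]]]]]].
  destruct Hy as [Hy|[a Ha]]; [congruence|].
  destruct Hz as [Hz|[b Hb]]; [congruence|].
  subst. rewrite !length_app in Hl. lia.
Qed.

Lemma concat_irr {A : Type} (w : list A) (fs : list (list A)) :
  (forall f, In f fs -> irreducible (A_w w) f) -> fs <> [] ->
  exists a, concat fs = w ++ a.
Proof.
  intros H Hne. destruct fs as [|f fs]; [congruence|].
  destruct (H f (or_introl eq_refl)) as [[Hf|[v Hv]] [Hf0 _]]; [congruence|].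
  subst. exists (v ++ concat fs). simpl. now rewrite app_assoc.
Qed.

Lemma concat_nil {A : Type} (w : list A) (fs : list (list A)) :
  (forall f, In f fs -> irreducible (A_w w) f) -> concat fs = [] -> fs = [].
Proof.
  intros H E. destruct fs as [|f fs]; [reflexivity|].
  simpl in E. apply app_eq_nil in E. destruct E as [E _].
  destruct (H f (or_introl eq_refl)) as [_ [Hf0 _]]. congruence.
Qed.

Lemma key {A : Type} (w f r : list A) (fs gs : list (list A)) :
  non_overlapping w -> irreducible (A_w w) (f ++ r) -> irreducible (A_w w) f ->
  r <> [] ->
  (forall f, In f fs -> irreducible (A_w w) f) ->
  (forall f, In f gs -> irreducible (A_w w) f) ->
  r ++ concat gs = concat fs -> False.
Proof.
  intros Hno Hg Hf Hr Hfs Hgs E.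
  assert (Hfsn : fs <> []).
  { intro. subst. simpl in E. apply app_eq_nil in E. tauto. }
  destruct (concat_irr w fs Hfs Hfsn) as [a Ha]. rewrite Ha in E.
  assert (Hpre : (exists c, r = w ++ c) -> False).
  { intros [c Hc]. destruct Hg as [_ [_ Hg]]. apply Hg.
    exists f, r. destruct Hf as [Hf1 [Hf2 _]].
    repeat split; auto. right. eauto. }
  destruct gs as [|g gs'].
  - simpl in E. rewrite app_nil_r in E. eauto.
  - destruct (concat_irr w (g :: gs') Hgs ltac:(discriminate)) as [b Hb].
    rewrite Hb in E.
    destruct (app_eq_app _ _ _ _ E) as [l [[H1 H2]|[H1 H2]]].
    + eauto.
    + destruct l as [|z l].
      * apply Hpre. exists []. rewrite app_nil_r in H1. rewrite H1. now rewrite app_nil_r.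
      * destruct (app_eq_app _ _ _ _ H2) as [l' [[H3 H4]|[H3 H4]]].
        -- apply Hno. exists l', r. split.
           ++ transitivity (r ++ ((z :: l) ++ l')); [rewrite app_assoc, <- H1; reflexivity|rewrite <- H3; reflexivity].
           ++ rewrite H1, length_app. simpl. destruct r; [congruence|]. simpl. lia.
        -- assert (length w = length r + length (z :: l)) by (rewrite H1; apply length_app).
           assert (length (z :: l) = length w + length l') by (rewrite H3; apply length_app).
           destruct r; [congruence|]. simpl in *. lia.
Qed.

Lemma uniq {A : Type} (w : list A) (fs : list (list A)) :
  non_overlapping w ->
  forall gs,
  (forall f, In f fs -> irreducible (A_w w) f) ->
  (forall f, In f gs -> irreducible (A_w w) f) ->
  concat fs = concat gs -> fs = gs.
Proof.
  intro Hno. induction fs as [|f fs IH]; intros gs Hfs Hgs E.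
  - symmetry. apply (concat_nil w); auto.
  - destruct gs as [|g gs].
    + apply (concat_nil w); auto.
    + simpl in E.
      assert (Hf : irreducible (A_w w) f) by (apply Hfs; now left).
      assert (Hg : irreducible (A_w w) g) by (apply Hgs; now left).
      assert (Hfs' : forall h, In h fs -> irreducible (A_w w) h) by (intros; apply Hfs; now right).
      assert (Hgs' : forall h, In h gs -> irreducible (A_w w) h) by (intros; apply Hgs; now right).
      destruct (app_eq_app _ _ _ _ E) as [l [[H1 H2]|[H1 H2]]].
      * destruct l as [|z l].
        -- rewrite app_nil_r in H1. subst. simpl in H2. f_equal. now apply IH.
        -- exfalso. subst f. apply (key w g (z :: l) gs fs); auto. discriminate.
      * destruct l as [|z l].
        -- rewrite app_nil_r in H1. subst. simpl in H2. f_equal. apply IH; auto.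
        -- exfalso. subst g. apply (key w f (z :: l) fs gs); auto. discriminate.
Qed.

Lemma exist_fact {A : Type} (w : list A) :
  forall n x, length x <= n -> A_w w x ->
  exists fs, (forall f, In f fs -> irreducible (A_w w) f) /\ concat fs = x.
Proof.
  induction n; intros x Hl Hx.
  - destruct x; [|simpl in Hl; lia]. exists []. simpl. split; auto. tauto.
  - destruct (classic (x = [])) as [E|Hne].
    + subst. exists []. simpl. split; auto. tauto.
    + destruct (classic (exists y z, A_w w y /\ A_w w z /\ y <> [] /\ z <> [] /\ x = y ++ z))
        as [[y [z [Hy [Hz [Hy0 [Hz0 E]]]]]]|Hn].
      * subst x. rewrite length_app in Hl.
        destruct y; [congruence|]. destruct z; [congruence|]. simpl in Hl.
        destruct (IHn (a :: y) ltac:(simpl; lia) Hy) as [f1 [H1 E1]].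
        destruct (IHn (a0 :: z) ltac:(simpl; lia) Hz) as [f2 [H2 E2]].
        exists (f1 ++ f2). split.
        -- intros f Hin. apply in_app_or in Hin. destruct Hin; auto.
        -- now rewrite concat_app, E1, E2.
      * exists [x]. split.
        -- intros f [<-|[]]. repeat split; auto.
        -- simpl. apply app_nil_r.
Qed.

Theorem lemma4 (A : Type) (w : list A) :
  free_submonoid (A_w w) <-> non_overlapping w.
Proof.
  split.
  - intros [_ Hfree] [x [y [E [Hy1 Hy2]]]].
    assert (Hw : w <> []) by (intro; subst; simpl in Hy2; lia).
    assert (Hz : A_w w (w ++ y ++ w)) by (right; eauto).
    destruct (Hfree _ Hz) as [fs [_ Hu]].
    assert (Ir1 : irreducible (A_w w) w) by
      (apply irr_short; auto; [right; exists []; now rewrite app_nil_r|destruct w; [congruence|simpl; lia]]).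
    assert (Ir2 : irreducible (A_w w) (y ++ w)) by
      (apply irr_short; auto; [right; rewrite <- E; eauto|destruct w; [congruence|]; intro H; apply app_eq_nil in H; tauto|rewrite length_app; lia]).
    assert (Ir3 : irreducible (A_w w) (w ++ y)) by
      (apply irr_short; auto; [right; eauto|destruct w; [congruence|]; intro H; apply app_eq_nil in H; tauto|rewrite length_app; lia]).
    assert (e1 : fs = [w; y ++ w]).
    { apply Hu. split.
      - intros f [<-|[<-|[]]]; auto.
      - simpl. now rewrite app_nil_r. }
    assert (e2 : fs = [w ++ y; w]).
    { apply Hu. split.
      - intros f [<-|[<-|[]]]; auto.
      - simpl. rewrite app_nil_r. now rewrite <- app_assoc. }
    rewrite e1 in e2. injection e2 as e3 _.
    assert (length w = length (w ++ y)) by (now rewrite <- e3).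
    rewrite length_app in H. lia.
  - intro Hno. split.
    + split.
      * now left.
      * intros x y [Hx|[a Ha]] Hy.
        -- subst. exact Hy.
        -- right. exists (a ++ y). subst. now rewrite app_assoc.
    + intros x Hx. destruct (exist_fact w (length x) x (le_n _) Hx) as [fs [H1 H2]].
      exists fs. split; [auto|].
      intros gs [G1 G2]. apply (uniq w fs Hno gs H1 G1). congruence.
Qed.
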